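(* Let $\Gamma\subseteq\mathrm{Aff}(\mathbb{R}^n)$ be an $n$-dimensional crystallographic group whose subgroup of pure translations is exactly $\mathbb{Z}^n$, with holonomy group $F$, and let $D\in N_{\mathrm{GL}_n(\mathbb{Z})}(F)$. Then the set $\{R(\varphi)\mid\varphi\in\mathrm{Aut}(\Gamma)\text{ with }\varphi|_{\mathbb{Z}^n}=D\}$ is finite.
   Context: $\mathrm{Aff}(\mathbb{R}^n)=\mathbb{R}^n\rtimes\mathrm{GL}_n(\mathbb{R})$ with multiplication $(d_1,D_1)(d_2,D_2)=(d_1+D_1d_2,D_1D_2)$. An $n$-dimensional crystallographic group is a discrete cocompact subgroup of $\mathbb{R}^n\rtimes O(n)$; here it is realised inside $\mathrm{Aff}(\mathbb{R}^n)$ such that $\Gamma\cap\mathbb{R}^n=\{(z,I_n)\mid z\in\mathbb{Z}^n\}$, identified with $\mathbb{Z}^n$. The holonomy group is $F=\{A\mid\exists a:\ (a,A)\in\Gamma\}\subseteq\mathrm{GL}_n(\mathbb{Z})$ (finite), and $N_{\mathrm{GL}_n(\mathbb{Z})}(F)$ is its normaliser in $\mathrm{GL}_n(\mathbb{Z})$. Every automorphism $\varphi$ of $\Gamma$ restricts to an automorphism of $\mathbb{Z}^n$, i.e. a matrix in $\mathrm{GL}_n(\mathbb{Z})$. For an automorphism $\varphi$, $R(\varphi)\in\{1,2,\dots\}\cup\{\infty\}$ is the number of classes of the equivalence relation $g\sim g'\iff\exists h\in\Gamma: g=hg'\varphi(h)^{-1}$ (Reidemeister number). *)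

(* Defs.v *)
From HB Require Import structures.
From mathcomp Require Import all_boot all_order all_algebra.
From mathcomp Require Import all_classical all_reals all_analysis.
Import numFieldNormedType.Exports.
Set Implicit Arguments. Unset Strict Implicit. Unset Printing Implicit Defensive.
Import Order.TTheory GRing.Theory Num.Theory.
Local Open Scope classical_set_scope.
Local Open Scope ring_scope.

(* An element (d, D) of R^n x M_n(R); it lies in Aff(R^n) when D is
   invertible.  Carries the product topology of the matrix topologies. *)
Notation aff R n := ('cV[R]_n * 'M[R]_n)%type.

Section Affine.
Variables (R : realType) (n : nat).
Local Notation aff := (aff R n).

Definition aff_one : aff := (0, 1%:M).
Definition aff_mul (g h : aff) : aff := (g.1 + g.2 *m h.1, g.2 *m h.2).
Definition aff_inv (g : aff) : aff := (- (invmx g.2 *m g.1), invmx g.2).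
Definition trans (z : 'cV[R]_n) : aff := (z, 1%:M).

Definition Aff : set aff := [set g | g.2 \in unitmx].

Definition Isom : set aff := [set g | g.2^T *m g.2 = 1%:M].

Definition is_subgroup (G : set aff) : Prop :=
  [/\ G aff_one,
      (forall g h, G g -> G h -> G (aff_mul g h)) &
      (forall g, G g -> G (aff_inv g))].

Definition discrete_subgroup (G : set aff) : Prop :=
  exists U : set aff, nbhs aff_one U /\ (G `&` U `<=` [set aff_one]).

Definition cocompact_in_Isom (G : set aff) : Prop :=
  exists C : set aff, [/\ compact C, C `<=` Isom &
    forall g, Isom g -> exists c, exists2 h, C c /\ G h & g = aff_mul c h].

Definition crystallographic (G : set aff) : Prop :=
  [/\ is_subgroup G, G `<=` Isom, discrete_subgroup G & cocompact_in_Isom G].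

(* Gamma <= Aff(R^n) "realised" as a crystallographic group: it is a subgroup
   of Aff(R^n) conjugate (inside Aff(R^n)) to a crystallographic group. *)
Definition realised_crystallographic (G : set aff) : Prop :=
  [/\ is_subgroup G, G `<=` Aff &
      exists2 a : aff, Aff a &
        crystallographic [set aff_mul (aff_mul a g) (aff_inv a) | g in G]].

Definition int_col (z : 'cV[R]_n) : Prop := forall i j, z i j \is a Num.int.
Definition int_mx (A : 'M[R]_n) : Prop := forall i j, A i j \is a Num.int.

Definition translations_Zn (G : set aff) : Prop :=
  forall z, G (trans z) <-> int_col z.

Definition holonomy (G : set aff) : set 'M[R]_n :=
  [set A | exists a, G (a, A)].

Definition GLnZ : set 'M[R]_n :=
  [set D | [/\ D \in unitmx, int_mx D & int_mx (invmx D)]].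

Definition normaliser_GLnZ (F : set 'M[R]_n) : set 'M[R]_n :=
  [set D | GLnZ D /\ [set D *m A *m invmx D | A in F] = F].

(* automorphisms of G (represented by functions on aff; only their values
   on G matter) *)
Definition is_aut (G : set aff) (phi : aff -> aff) : Prop :=
  [/\ (forall g, G g -> G (phi g)),
      (forall g h, G g -> G h -> phi (aff_mul g h) = aff_mul (phi g) (phi h)),
      (forall g h, G g -> G h -> phi g = phi h -> g = h) &
      (forall h, G h -> exists2 g, G g & phi g = h)].

Definition restricts_to (phi : aff -> aff) (D : 'M[R]_n) : Prop :=
  forall z, int_col z -> phi (trans z) = trans (D *m z).

Definition twisted_conj (G : set aff) (phi : aff -> aff) (g g' : aff) : Prop :=
  exists2 h, G h & g = aff_mul (aff_mul h g') (aff_inv (phi h)).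

Definition reid_classes (G : set aff) (phi : aff -> aff) : set (set aff) :=
  [set [set g' | G g' /\ twisted_conj G phi g g'] | g in G].

(* R(phi) = r, where r : option nat, Some k = k, None = infinity *)
Definition reidemeister_is (G : set aff) (phi : aff -> aff) (r : option nat)
  : Prop :=
  match r with
  | Some k => (reid_classes G phi #= `I_k)%card
  | None => infinite_set (reid_classes G phi)
  end.

Definition reidemeister_spectrum_D (G : set aff) (D : 'M[R]_n)
  : set (option nat) :=
  [set r | exists phi, [/\ is_aut G phi, restricts_to phi D &
                           reidemeister_is G phi r]].

End Affine.

(* Main.v *)
Require Import Defs.
From HB Require Import structures.
From mathcomp Require Import all_boot all_order all_algebra.
From mathcomp Require Import all_classical all_reals all_analysis.
Set Implicit Arguments. Unset Strict Implicit. Unset Printing Implicit Defensive.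
Import Order.TTheory GRing.Theory Num.Theory.
Local Open Scope classical_set_scope.
Local Open Scope ring_scope.
Local Open Scope card_scope.

Section Nrm.
Variables (R : realType) (n : nat).

Definition nrm (M : 'M[R]_n) : R := \sum_i \sum_j `|M i j|.

Lemma le_sum_term (I : finType) (F : I -> R) i :
  (forall j, 0 <= F j) -> F i <= \sum_j F j.
Proof.
move=> h; rewrite (bigD1 i) //= lerDl; apply: sumr_ge0 => j _; exact: h.
Qed.

Lemma nrm_ge0 (M : 'M[R]_n) : 0 <= nrm M.
Proof. by apply: sumr_ge0 => i _; apply: sumr_ge0. Qed.

Lemma entry_le_nrm (M : 'M[R]_n) i j : `|M i j| <= nrm M.
Proof.
apply: (@le_trans _ _ (\sum_j `|M i j|)).
  by apply: le_sum_term.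
rewrite /nrm; apply: (@le_sum_term _ (fun i0 => \sum_(j < n) `|M i0 j|) i) => k.
by apply: sumr_ge0.
Qed.

Lemma nrmM (X Y : 'M[R]_n) : nrm (X *m Y) <= nrm X * nrm Y.
Proof.
rewrite /nrm mulr_suml; apply: ler_sum => i _.
apply: (@le_trans _ _ (\sum_j \sum_k `|X i k| * `|Y k j|)).
  apply: ler_sum => j _; rewrite mxE.
  apply: (le_trans (ler_norm_sum _ _ _)).
  by apply: ler_sum => k _; rewrite normrM.
rewrite exchange_big /= mulr_suml; apply: ler_sum => k _.
rewrite -mulr_sumr; apply: ler_wpM2l => //.
apply: (@le_sum_term _ (fun k0 => \sum_(j < n) `|Y k0 j|) k) => k'.
by apply: sumr_ge0.
Qed.

Lemma orth_entry (O : 'M[R]_n) i j : O^T *m O = 1%:M -> `|O i j| <= 1.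
Proof.
move=> h.
have e : \sum_k O k j ^+ 2 = 1.
  have := congr1 (fun M : 'M[R]_n => M j j) h; rewrite !mxE eqxx /= => E.
  apply: (etrans _ E); apply: eq_bigr => k _; by rewrite mxE expr2.
have : O i j ^+ 2 <= 1.
  rewrite -e; apply: (@le_sum_term _ (fun k => O k j ^+ 2) i) => k.
  exact: sqr_ge0.
rewrite -real_normK ?num_real //.
move=> h2; rewrite leNgt; apply/negP => h3.
have : 1 < `|O i j| ^+ 2 by rewrite exprn_egt1.
by rewrite ltNge h2.
Qed.

End Nrm.
Section Grp.
Variables (R : realType) (n : nat).
Implicit Types g h k : aff R n.
Local Notation U g := (g.2 \in unitmx).
Local Notation "x ** y" := (aff_mul x y) (at level 40, left associativity).
Local Notation one := (aff_one R n).

Lemma mulA g h k : g ** h ** k = g ** (h ** k).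
Proof.
case: g h k => [g1 g2] [h1 h2] [k1 k2]; rewrite /aff_mul /=.
by rewrite mulmxDr !mulmxA addrA.
Qed.

Lemma mul1g g : one ** g = g.
Proof. by case: g => g1 g2; rewrite /aff_mul /= !mul1mx add0r. Qed.

Lemma mulg1 g : g ** one = g.
Proof. by case: g => g1 g2; rewrite /aff_mul /= mulmx0 addr0 mulmx1. Qed.

Lemma mulVg g : U g -> aff_inv g ** g = one.
Proof.
case: g => g1 g2 /= u; rewrite /aff_mul /aff_inv /aff_one /=.
by rewrite mulVmx // addrC subrr.
Qed.

Lemma mulgV g : U g -> g ** aff_inv g = one.
Proof.
case: g => g1 g2 /= u; rewrite /aff_mul /aff_inv /aff_one /=.
by rewrite mulmxN mulmxA mulmxV // mul1mx subrr.
Qed.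

Lemma U_mul g h : U g -> U h -> U (g ** h).
Proof. by move=> ug uh; rewrite /= unitmx_mul ug uh. Qed.

Lemma U_inv g : U g -> U (aff_inv g).
Proof. by move=> ug; rewrite /= unitmx_inv. Qed.

Lemma U_one : U one.
Proof. exact: unitmx1. Qed.

Lemma mulKg g h : U g -> aff_inv g ** (g ** h) = h.
Proof. by move=> u; rewrite -mulA mulVg // mul1g. Qed.

Lemma mulKVg g h : U g -> g ** (aff_inv g ** h) = h.
Proof. by move=> u; rewrite -mulA mulgV // mul1g. Qed.

Lemma mulgK g h : U h -> g ** h ** aff_inv h = g.
Proof. by move=> u; rewrite mulA mulgV // mulg1. Qed.

Lemma mulgKV g h : U h -> g ** aff_inv h ** h = g.
Proof. by move=> u; rewrite mulA mulVg // mulg1. Qed.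

Lemma inv_uniq g h : U g -> g ** h = one -> h = aff_inv g.
Proof. by move=> u e; rewrite -(mulKg h u) e mulg1. Qed.

Lemma invM g h : U g -> U h -> aff_inv (g ** h) = aff_inv h ** aff_inv g.
Proof.
move=> ug uh; apply/esym/inv_uniq; first exact: U_mul.
by rewrite mulA mulKVg // mulgV.
Qed.

Lemma invK g : U g -> aff_inv (aff_inv g) = g.
Proof. by move=> u; apply/esym/inv_uniq; [exact: U_inv | exact: mulVg]. Qed.

Lemma inv1 : aff_inv one = one.
Proof. by apply/esym/inv_uniq; [exact: U_one | exact: mul1g]. Qed.


Definition Trel (D : 'M[R]_n) (x y : aff R n) : Prop :=
  exists2 z, int_col z & x = trans z ** y ** aff_inv (trans (D *m z)).

Lemma transE (z w : 'cV[R]_n) (y : aff R n) :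
  trans z ** y ** aff_inv (trans w) = (z + y.1 - y.2 *m w, y.2).
Proof.
by rewrite /trans /aff_mul /aff_inv /= invmx1 !mul1mx mulmx1 mulmxN.
Qed.

Lemma TrelE D x y : Trel D x y <->
  exists2 z, int_col z & x = (z + y.1 - y.2 *m (D *m z), y.2).
Proof. by split=> -[z iz ->]; exists z; rewrite ?transE. Qed.

Lemma int_col0 : @int_col R n (0 : 'cV[R]_n).
Proof. by move=> i j; rewrite mxE rpred0. Qed.

Lemma int_colN (z : 'cV[R]_n) : int_col z -> int_col (- z).
Proof. by move=> h i j; rewrite mxE rpredN. Qed.

Lemma int_colD (z w : 'cV[R]_n) : int_col z -> int_col w -> int_col (z + w).
Proof. by move=> h1 h2 i j; rewrite mxE rpredD. Qed.

Lemma Trel_refl D x : Trel D x x.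
Proof.
apply/TrelE; exists 0; first exact: int_col0.
by case: x => x1 x2 /=; rewrite !mulmx0 subr0 add0r.
Qed.

Lemma Trel_sym D x y : Trel D x y -> Trel D y x.
Proof.
move=> /TrelE [z iz ->]; apply/TrelE; exists (- z); first exact: int_colN.
case: y => y1 y2 /=; congr pair.
by rewrite !mulmxN opprK addrA subrK addKr.
Qed.

Lemma Trel_trans D x y w : Trel D x y -> Trel D y w -> Trel D x w.
Proof.
move=> /TrelE [z iz ->] /TrelE [z' iz' ->]; apply/TrelE; exists (z + z').
  exact: int_colD.
case: w => w1 w2 /=; congr pair.
by rewrite !mulmxDr opprD !addrA [LHS]addrAC.
Qed.

Variable G : set (aff R n).
Hypothesis subG : is_subgroup G.
Hypothesis GAff : G `<=` Aff (n:=n).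

Lemma G1 : G one. Proof. by case: subG. Qed.
Lemma GM g h : G g -> G h -> G (g ** h). Proof. by case: subG => _ h2 _; apply: h2. Qed.
Lemma GV g : G g -> G (aff_inv g). Proof. by case: subG => _ _; apply. Qed.
Lemma GU g : G g -> U g. Proof. exact: GAff. Qed.

Lemma ident (a t x p q : aff R n) : U a -> U t -> U p -> U q ->
  (a ** t ** aff_inv a) ** (a ** x ** aff_inv p) ** aff_inv (p ** q ** aff_inv p)
  = a ** t ** x ** aff_inv (p ** q).
Proof.
move=> ua ut up uq.
rewrite (invM (U_mul up uq) (U_inv up)) invK // !mulA mulKg // mulKg //.
Qed.

Variable D : 'M[R]_n.
Hypothesis transZ : translations_Zn G.

Lemma trans_eq (t : aff R n) : t.2 = 1%:M -> t = trans t.1.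
Proof. by case: t => t1 t2 /= ->. Qed.

Definition Tclass x := [set y | G y /\ Trel D x y].
Definition Q1 := [set Tclass x | x in G].

Lemma Tclass_eq x y : Trel D x y -> Tclass x = Tclass y.
Proof.
move=> h; apply/seteqP; split => w [Gw h']; split => //.
  exact: Trel_trans (Trel_sym h) h'.
exact: Trel_trans h h'.
Qed.

Definition rep (A : 'M[R]_n) : aff R n := (xget 0 [set a | G (a, A)], A).
Definition S := rep @` holonomy G.

Lemma rep_G g : G g -> G (rep g.2).
Proof. by case: g => g1 g2 Gg; apply: (@xgetI _ 0 [set a | G (a, g2)] g1). Qed.

Lemma coset g : G g -> exists z, [/\ int_col z, G (rep g.2) & g = rep g.2 ** trans z].
Proof.
move=> Gg; have Gr := rep_G Gg.
have ur := GU Gr.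
set t := aff_inv (rep g.2) ** g.
have Gt : G t by apply: GM => //; apply: GV.
have t2 : t.2 = 1%:M by rewrite /t /aff_mul /aff_inv /= mulVmx //; exact: GU.
exists t.1; split => //.
  by apply/transZ; rewrite -trans_eq.
by rewrite -trans_eq // /t mulKVg.
Qed.


Lemma holo_int A : holonomy G A -> int_mx A.
Proof.
move=> [c Gc] i j.
have uA : A \in unitmx by exact: (GU Gc).
set e : 'cV[R]_n := delta_mx j 0.
set t := (c, A) ** trans e ** aff_inv (c, A).
have Gt : G t.
  by apply: GM; [apply: GM => //; apply/transZ => i' j'; rewrite mxE; case: (_ && _); [exact: rpred1 | exact: rpred0] | exact: GV].
have t2 : t.2 = 1%:M by rewrite /t /aff_mul /aff_inv /= mulmx1 mulmxV.
have : int_col t.1 by apply/transZ; rewrite -trans_eq.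
have -> : t.1 = A *m e.
  rewrite /t /aff_mul /aff_inv /= mulmx1 mulmxN mulmxA mulmxV // mul1mx.
  by rewrite addrAC subrr add0r.
by move/(_ i 0); rewrite /e -colE mxE.
Qed.

Section Phi.
Variable phi : aff R n -> aff R n.
Hypothesis autphi : is_aut G phi.

Lemma phiG g : G g -> G (phi g). Proof. by case: autphi => h _ _ _; apply: h. Qed.
Lemma phiM g h : G g -> G h -> phi (g ** h) = phi g ** phi h.
Proof. by case: autphi => _ h' _ _; apply: h'. Qed.

Lemma phi1 : phi one = one.
Proof.
have u := GU (phiG G1).
have e : phi one = phi one ** phi one.
  by rewrite -phiM ?mul1g //; exact: G1.
by rewrite -[LHS](mulgK (phi one) u) -e mulgV.
Qed.

Lemma phiV g : G g -> phi (aff_inv g) = aff_inv (phi g).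
Proof.
move=> Gg; apply: inv_uniq; first exact: GU (phiG Gg).
rewrite -phiM //; last exact: GV.
by rewrite mulgV ?phi1 //; exact: GU.
Qed.

Local Notation tc := (twisted_conj G phi).

Lemma tc_refl x : tc x x.
Proof. by exists one; [exact: G1 | rewrite phi1 inv1 mul1g mulg1]. Qed.

Lemma tc_trans x y w : tc x y -> tc y w -> tc x w.
Proof.
move=> [h Gh ->] [k Gk ->]; exists (h ** k); first exact: GM.
rewrite phiM // invM; try by apply: GU; apply: phiG.
by rewrite !mulA.
Qed.


Hypothesis resD : restricts_to phi D.

Lemma Trel_tc x y : Trel D x y -> tc x y.
Proof.
move=> [z iz ->]; exists (trans z); first exact/transZ.
by rewrite resD.
Qed.

Definition Gcl x := [set g' | G g' /\ tc x g'].
Definition gmap (c : set (aff R n)) := [set y | G y /\ exists2 x, c x & tc x y].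

Lemma gmapE x : G x -> gmap (Tclass x) = Gcl x.
Proof.
move=> Gx; apply/seteqP; split => y [Gy H]; split => //.
  by case: H => x' [Gx' T] t; apply: tc_trans (Trel_tc T) t.
by exists x => //; split => //; exact: Trel_refl.
Qed.

Lemma reid_sub : reid_classes G phi `<=` gmap @` Q1.
Proof. by move=> _ [x Gx <-]; exists (Tclass x); [exists x | exact: gmapE]. Qed.

Definition fmap (p : set (aff R n) * aff R n) :=
  Tclass (p.2 ** xget one p.1 ** aff_inv (phi p.2)).

Lemma Q1_sub : Q1 `<=` fmap @` (reid_classes G phi `*` S).
Proof.
move=> _ [y Gy <-].
have ey : Gcl y y by split => //; exact: tc_refl.
have [Gx [h Gh yE]] := @xgetI _ one _ _ ey.
set x := xget one (Gcl y) in Gx yE *.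
have [z [iz Gg hE]] := coset Gh.
set g := rep h.2 in Gg hE *.
have Sg : S g by exists h.2 => //; exists h.1; case: (h) Gh.
clearbody g.
have ug := GU Gg.
set t' := g ** trans z ** aff_inv g.
have Gtz : G (trans z) by exact/transZ.
have Gt' : G t' by apply: GM; [exact: GM | exact: GV].
have t2 : t'.2 = 1%:M by rewrite /t' /aff_mul /aff_inv /= mulmx1 mulmxV.
have it' : int_col t'.1 by apply/transZ; rewrite -trans_eq.
exists (Gcl y, g).
  split; first by exists y.
  exact: Sg.
rewrite /fmap /=; apply/esym/Tclass_eq.
exists t'.1 => //.
rewrite -resD // -trans_eq //.
rewrite /t' phiM ?phiV //; last exact: GV.
rewrite phiM //.
rewrite -/x {1}yE hE phiM //. 2: exact: (GM Gg Gtz).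
have upg := GU (phiG Gg).
have upt := GU (phiG Gtz).
by rewrite ident //; exact: unitmx1.
Qed.


Lemma key (m : nat) : finite_set (holonomy G) ->
  (reid_classes G phi #= `I_m) ->
  finite_set Q1 /\ (forall N, Q1 #= `I_N -> (m <= N)%N).
Proof.
move=> hF hk; split.
  apply: sub_finite_set Q1_sub _.
  apply: finite_image; apply: finite_setX; last exact: finite_image.
  by apply/finite_setP; exists m.
move=> N hN.
have h1 : reid_classes G phi #<= Q1.
  apply: card_le_trans (subset_card_le reid_sub) _.
  exact: card_image_le.
by rewrite -card_le_II -(card_le_eql hk) -(card_le_eqr hN).
Qed.

End Phi.
End Grp.

Section Fin.
Variables (R : realType) (n : nat).

Lemma finite_box (K : nat) :
  finite_set [set A : 'M[R]_n | int_mx A /\ forall i j, `|A i j| <= K%:R].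
Proof.
pose f := fun p : ('M['I_K.+1]_n * 'M[bool]_n)%type =>
  (\matrix_(i, j) ((-1) ^+ (p.2 i j) * (p.1 i j : nat)%:R) : 'M[R]_n).
apply: (@sub_finite_set _ _ (f @` setT)); last exact/finite_image/finite_finset.
move=> A [iA bA].
exists (\matrix_(i, j) inord (Num.Def.trunc `|A i j|), \matrix_(i, j) (A i j < 0)) => //.
apply/matrixP => i j; rewrite /f !mxE inordK; last first.
  by rewrite ltnS truncn_le_nat; apply: (le_lt_trans (bA i j)); rewrite ltr_nat.
by rewrite truncK ?natr_norm_int // mulr_sign_norm.
Qed.

Lemma holo_finite (G : set (aff R n)) :
  realised_crystallographic G -> translations_Zn G -> finite_set (holonomy G).
Proof.
case=> subG GAff [a Aa [_ isoX _ _]] tZ.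
set P := a.2.
have uP : P \in unitmx by exact: Aa.
pose B := nrm (invmx P) * (\sum_(i < n) \sum_(j < n) (1 : R)) * nrm P.
have bnd : forall A, holonomy G A -> forall i j, `|A i j| <= B.
  move=> A [c Gc] i j.
  set O := (P *m A) *m invmx P.
  have hO : O^T *m O = 1%:M.
    have := isoX (aff_mul (aff_mul a (c, A)) (aff_inv a)).
    by apply; exists (c, A).
  have AE : A = invmx P *m O *m P.
    by rewrite /O !mulmxA mulVmx // mul1mx mulmxKV.
  rewrite AE.
  apply: (le_trans (entry_le_nrm _ i j)).
  apply: (le_trans (nrmM _ _)).
  rewrite /B; apply: ler_wpM2r; first exact: nrm_ge0.
  apply: (le_trans (nrmM _ _)).
  apply: ler_wpM2l; first exact: nrm_ge0.
  rewrite /nrm; apply: ler_sum => i' _; apply: ler_sum => j' _.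
  exact: orth_entry.
apply: (@sub_finite_set _ _ _ _ (finite_box (Num.Def.trunc B).+1)).
move=> A hA; split; first exact: (holo_int subG GAff tZ).
move=> i j; apply: (le_trans (bnd A hA i j)).
exact: ltW (truncnS_gt B).
Qed.

End Fin.

Theorem theorem5p5 (R : realType) (n : nat) (Gamma : set (aff R n))
  (D : 'M[R]_n) :
  realised_crystallographic Gamma ->
  translations_Zn Gamma ->
  normaliser_GLnZ (holonomy Gamma) D ->
  finite_set (reidemeister_spectrum_D Gamma D).
Proof.
move=> hr tZ _.
have hF := holo_finite hr tZ.
case: hr => subG GAff _.
have hkey : forall phi m, is_aut Gamma phi -> restricts_to phi D ->
    (reid_classes Gamma phi #= `I_m) ->
    finite_set (Q1 Gamma D) /\ (forall N, Q1 Gamma D #= `I_N -> (m <= N)%N).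
  by move=> phi m ha hres; apply: (key subG GAff tZ ha hres).
case: (pselect (finite_set (Q1 Gamma D))) => [/finite_setP [N hN] | hinf].
  apply: (@sub_finite_set _ _ ([set None] `|` (Some @` `I_N.+1))).
    move=> [m|] [phi [ha hres hr]]; [right | by left].
    exists m => //=.
    by have [_ /(_ N hN)] := hkey phi m ha hres hr.
  by rewrite finite_setU; split; [exact: finite_set1 | exact/finite_image/finite_II].
apply: (@sub_finite_set _ _ [set None]); last exact: finite_set1.
move=> [m|] // [phi [ha hres hr]].
by have [] := hkey phi m ha hres hr.
Qed.
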